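(* Let $\phi:\mathbb{R}\to\mathbb{R}$ be a $C^\infty$ function such that $\phi(t)=0$ for $t\le 0$, $\phi(t)=e^{-1/e^{-1/t}}$ for $t\in\,]0,1]$, and $\phi'(t)>0$ for all $t>0$. Fix $0<\lambda<1$ and define $h:\mathbb{R}\to\mathbb{R}$ by $h(t)=t$ for $t\le 0$ and $h(t)=\phi^{-1}(\lambda^3\phi(t))$ for $t>0$, where $\phi^{-1}$ denotes the inverse of the strictly increasing map $\phi$ restricted to $]0,+\infty[$. Then $h$ is of class $C^\infty$ at $0$ (i.e. in a neighbourhood of $0$). *)

(* Defs.v *)
From Stdlib Require Import Reals.
From Coquelicot Require Import Coquelicot.
Open Scope R_scope.

Definition smooth (f : R -> R) : Prop :=
  forall (n : nat) (x : R), ex_derive_n f n x.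

Definition smooth_near (f : R -> R) (a : R) : Prop :=
  exists eps : R, 0 < eps /\
    forall (n : nat) (x : R), Rabs (x - a) < eps -> ex_derive_n f n x.

(* Main.v *)
Require Import Defs.
From Stdlib Require Import Reals Lra Lia List.
From Coquelicot Require Import Coquelicot.
Open Scope R_scope.

Fixpoint Cn (n : nat) (f : R -> R) : Prop :=
  match n with
  | O => True
  | S n => (forall x, ex_derive f x) /\ Cn n (Derive f)
  end.

Lemma Cn_ext n : forall f g, (forall x, f x = g x) -> Cn n f -> Cn n g.
Proof.
induction n as [|n IH]; simpl; auto.
intros f g E [H1 H2]; split.
- intro x; apply ex_derive_ext with f; auto.
- apply IH with (Derive f); auto. intro x; apply Derive_ext; auto.
Qed.

Lemma Cn_S n : forall f, Cn (S n) f -> Cn n f.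
Proof.
induction n as [|n IH]; simpl; auto.
intros f [H1 [H2 H3]]; split; auto. apply IH; simpl; auto.
Qed.

Lemma Cn_ex n : forall f, Cn (S n) f -> forall x, ex_derive_n f (S n) x.
Proof.
induction n as [|n IH]; intros f Hf x.
- simpl. apply Hf.
- destruct Hf as [H1 H2].
  change (ex_derive (Derive_n f (S n)) x).
  apply ex_derive_ext with (Derive_n (Derive f) n).
  { intro t. replace (S n) with (n+1)%nat by lia. rewrite <- (Derive_n_comp f n 1). reflexivity. }
  specialize (IH (Derive f) H2 x). destruct n; simpl in *; auto.
Qed.

Lemma Cn_const n : forall c, Cn n (fun _ => c).
Proof.
induction n as [|n IH]; simpl; auto. intro c; split.
- intro; apply ex_derive_const.
- apply Cn_ext with (fun _ => 0); auto. intro; rewrite Derive_const; auto.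
Qed.

Lemma Cn_id n : Cn n (fun x => x).
Proof.
destruct n; simpl; auto. split. intro; apply ex_derive_id.
apply Cn_ext with (fun _ => 1). intro; rewrite Derive_id; auto. apply Cn_const.
Qed.

Lemma Cn_plus n : forall f g, Cn n f -> Cn n g -> Cn n (fun x => f x + g x).
Proof.
induction n as [|n IH]; simpl; auto.
intros f g [F1 F2] [G1 G2]; split.
- intro x; apply (ex_derive_plus f g x); auto.
- apply Cn_ext with (fun x => Derive f x + Derive g x).
  intro; rewrite Derive_plus; auto. apply IH; auto.
Qed.

Lemma Cn_mult n : forall f g, Cn n f -> Cn n g -> Cn n (fun x => f x * g x).
Proof.
induction n as [|n IH]; simpl; auto.
intros f g Hf Hg. pose proof (Cn_S n f Hf) as Hf'. pose proof (Cn_S n g Hg) as Hg'.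
destruct Hf as [F1 F2]; destruct Hg as [G1 G2]; split.
- intro x; apply (ex_derive_mult f g x); auto.
- apply Cn_ext with (fun x => Derive f x * g x + f x * Derive g x).
  intro; rewrite Derive_mult; auto. apply Cn_plus; apply IH; auto.
Qed.

Lemma Cn_inv n : forall v, (forall x, v x <> 0) -> Cn n v -> Cn n (fun x => / v x).
Proof.
induction n as [|n IH]; simpl; auto.
intros v Hv Hc. pose proof (Cn_S n v Hc) as Hc'. destruct Hc as [V1 V2]; split.
- intro x. apply ex_derive_inv; auto.
- apply Cn_ext with (fun x => (- Derive v x) * (/ v x * / v x)).
  intro x. rewrite Derive_inv; auto. field. auto.
  apply Cn_mult. apply Cn_ext with (fun x => (-1) * Derive v x). intro; ring.
  apply Cn_mult; auto. apply Cn_const.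
  apply Cn_mult; apply IH; auto.
Qed.

Lemma Cn_ln n : forall v, (forall x, 0 < v x) -> Cn n v -> Cn n (fun x => ln (v x)).
Proof.
destruct n as [|n]; simpl; auto.
intros v Hv [V1 V2].
assert (D : forall x, is_derive (fun x => ln (v x)) x (Derive v x * / v x)).
{ intro x. apply (is_derive_comp ln v x (/ v x) (Derive v x)).
  apply is_derive_ln; auto. apply Derive_correct; auto. }
split.
- intro x; eexists; apply D.
- apply Cn_ext with (fun x => Derive v x * / v x).
  intro x; symmetry; apply is_derive_unique, D.
  apply Cn_mult; auto. apply Cn_inv. intro x; specialize (Hv x); lra.
  apply Cn_S; simpl; auto.
Qed.

Lemma isd_const (c x : R) : is_derive (fun _ : R => c) x 0.
Proof. auto_derive; auto. Qed.
Lemma isd_id (x : R) : is_derive (fun y : R => y) x 1.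
Proof. auto_derive; auto. Qed.
Lemma isd_plus f g (x a b : R) : is_derive f x a -> is_derive g x b -> is_derive (fun y => f y + g y) x (a+b).
Proof. intros; apply (is_derive_plus f g x a b); auto. Qed.
Lemma isd_mult f g (x a b : R) : is_derive f x a -> is_derive g x b -> is_derive (fun y => f y * g y) x (a * g x + f x * b).
Proof. intros; apply (is_derive_mult f g x a b); auto. intros; apply Rmult_comm. Qed.

Fixpoint peval (P : list R) (s : R) : R :=
  match P with nil => 0 | a :: l => a + s * peval l s end.
Fixpoint padd (P Q : list R) : list R :=
  match P, Q with
  | nil, _ => Q
  | _, nil => P
  | a :: l, b :: m => (a + b) :: padd l m
  end.
Fixpoint pder (P : list R) : list R :=
  match P with nil => nil | a :: l => padd l (0 :: pder l) end.
Definition pneg (P : list R) := map Ropp P.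

Lemma padd_ok P : forall Q s, peval (padd P Q) s = peval P s + peval Q s.
Proof.
induction P as [|a l IH]; intros [|b m] s; simpl; try ring.
rewrite IH; ring.
Qed.
Lemma pneg_ok P s : peval (pneg P) s = - peval P s.
Proof. induction P as [|a l IH]; simpl; [ring|]. rewrite IH; ring. Qed.

Lemma pder_ok P : forall s, is_derive (peval P) s (peval (pder P) s).
Proof.
induction P as [|a l IH]; intro s; simpl.
- apply isd_const.
- rewrite padd_ok. simpl.
  apply is_derive_ext with (fun s => a + s * peval l s). { intro; reflexivity. }
  replace (peval l s + (0 + s * peval (pder l) s)) with (0 + (1 * peval l s + s * peval (pder l) s)) by ring.
  apply (isd_plus (fun _ => a) (fun s => s * peval l s)).
  apply isd_const.
  apply (isd_mult (fun s => s) (peval l)). apply isd_id. apply IH.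
Qed.

Definition step (P : list R) := 0 :: 0 :: padd P (pneg (pder P)).

Definition fl (P : list R) (t : R) : R :=
  if Rle_dec t 0 then 0 else peval P (/ t) * exp (- / t).

Fixpoint pabs (P : list R) : R := match P with nil => 0 | a :: l => Rabs a + pabs l end.

Lemma pabs_ge0 P : 0 <= pabs P.
Proof. induction P; simpl; [lra|]. pose proof (Rabs_pos a); lra. Qed.

Lemma peval_bound P : forall s, 1 <= s -> Rabs (peval P s) <= pabs P * s ^ length P.
Proof.
induction P as [|a l IH]; intros s Hs; simpl.
- rewrite Rabs_R0; lra.
- pose proof (IH s Hs) as H. pose proof (pabs_ge0 l).
  assert (1 <= s ^ length l) by (apply pow_R1_Rle; lra).
  assert (0 <= Rabs a) by apply Rabs_pos.
  eapply Rle_trans. apply Rabs_triang. rewrite Rabs_mult, (Rabs_right s) by lra.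
  assert (s * Rabs (peval l s) <= s * (pabs l * s ^ length l)) by (apply Rmult_le_compat_l; lra).
  assert (Rabs a <= Rabs a * (s * s ^ length l)).
  { rewrite <- (Rmult_1_r (Rabs a)) at 1. apply Rmult_le_compat_l; auto.
    replace 1 with (1*1) by ring. apply Rmult_le_compat; lra. }
  nra.
Qed.

Lemma exp_pow_n m : forall x, exp x ^ m = exp (INR m * x).
Proof.
induction m as [|m IH]; intro x; simpl.
- rewrite Rmult_0_l, exp_0; auto.
- rewrite IH, <- exp_plus. f_equal. destruct m; simpl; ring.
Qed.

Lemma exp_big N s : 0 < s -> s ^ N * exp (- s) <= INR (S N) ^ (S N) / s.
Proof.
intro Hs. set (m := S N).
assert (Hm : 0 < INR m) by (apply lt_0_INR; unfold m; lia).
assert (H1 : s / INR m <= exp (s / INR m)) by (pose proof (exp_ineq1_le (s / INR m)); lra).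
assert (H2 : (s / INR m) ^ m <= exp s).
{ replace (exp s) with (exp (s / INR m) ^ m).
  apply pow_incr; split; auto. apply Rlt_le, Rdiv_lt_0_compat; lra.
  rewrite exp_pow_n; f_equal; field; lra. }
unfold Rdiv in H2; rewrite Rpow_mult_distr, pow_inv in H2.
assert (Hpm : 0 < INR m ^ m) by (apply pow_lt; lra).
assert (Hsm : 0 < s ^ m) by (apply pow_lt; lra).
pose proof (exp_pos s).
rewrite exp_Ropp.
assert (H3 : s ^ m <= exp s * INR m ^ m).
{ apply (Rmult_le_compat_r (INR m ^ m)) in H2; [|lra].
  replace (s ^ m * / INR m ^ m * INR m ^ m) with (s ^ m) in H2 by (field; lra). lra. }
assert (E1 : s ^ m = s ^ N * s) by (unfold m; simpl; ring).
assert (E2 : s ^ N * / exp s = (s ^ N * s) / (exp s * s)) by (field; lra).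
assert (E3 : INR m ^ m / s = (exp s * INR m ^ m) / (exp s * s)) by (field; lra).
fold m. rewrite E2, E3. unfold Rdiv. apply Rmult_le_compat_r.
apply Rlt_le, Rinv_0_lt_compat; nra. lra.
Qed.

Lemma lim0 Q eps : 0 < eps -> exists delta, 0 < delta /\
  forall t, 0 < t < delta -> Rabs (peval Q (/ t) * exp (- / t)) < eps.
Proof.
intro He. set (N := length Q). set (K := (pabs Q + 1) * INR (S N) ^ S N).
assert (HK : 0 < K).
{ unfold K. pose proof (pabs_ge0 Q). apply Rmult_lt_0_compat. lra. apply pow_lt, lt_0_INR; lia. }
exists (Rmin 1 (eps / K)). split.
{ apply Rmin_glb_lt; [lra|]. apply Rdiv_lt_0_compat; lra. }
intros t [Ht1 Ht2]. pose proof (Rmin_l 1 (eps/K)). pose proof (Rmin_r 1 (eps/K)).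
set (s := / t).
assert (Hs : 1 <= s). { unfold s. rewrite <- Rinv_1. apply Rinv_le_contravar; lra. }
rewrite Rabs_mult, (Rabs_right (exp _)) by (apply Rle_ge, Rlt_le, exp_pos).
pose proof (peval_bound Q s Hs) as B. fold N in B.
pose proof (exp_big N s ltac:(lra)) as C.
pose proof (exp_pos (- s)). pose proof (pabs_ge0 Q).
assert (Rabs (peval Q s) * exp (- s) <= pabs Q * (s ^ N * exp (- s))).
{ rewrite <- Rmult_assoc. apply Rmult_le_compat_r; lra. }
assert (0 <= s ^ N * exp (-s)). { apply Rmult_le_pos; [apply pow_le; lra | lra]. }
assert (pabs Q * (s ^ N * exp (- s)) <= (pabs Q + 1) * (INR (S N) ^ S N / s)).
{ apply Rmult_le_compat; lra. }
assert ((pabs Q + 1) * (INR (S N) ^ S N / s) = K * t).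
{ unfold K, s. field. lra. }
assert (K * t < eps).
{ apply (Rmult_lt_reg_r (/K)). apply Rinv_0_lt_compat; lra.
  replace (K * t * / K) with t by (field; lra). lra. }
lra.
Qed.

Lemma loc_lt x a : x < a -> locally x (fun t => t < a).
Proof. intro H. apply (open_lt a x H). Qed.
Lemma loc_gt x a : a < x -> locally x (fun t => a < t).
Proof. intro H. apply (open_gt a x H). Qed.

Lemma fl_pos P t : 0 < t -> fl P t = peval P (/ t) * exp (- / t).
Proof. intro H; unfold fl; destruct (Rle_dec t 0); [lra|auto]. Qed.
Lemma fl_neg P t : t <= 0 -> fl P t = 0.
Proof. intro H; unfold fl; destruct (Rle_dec t 0); [auto|lra]. Qed.

Lemma fl_derive P x : is_derive (fl P) x (fl (step P) x).
Proof.
destruct (Rlt_or_le 0 x) as [Hx|Hx]; [|destruct (Rle_lt_or_eq_dec x 0 Hx) as [Hx'|Hx']].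
- rewrite fl_pos by auto.
  apply is_derive_ext_loc with (fun t => peval P (/ t) * exp (- / t)).
  { apply filter_imp with (fun t => 0 < t); [|apply loc_gt; auto].
    intros t Ht; rewrite fl_pos; auto. }
  assert (D1 : is_derive (fun t => peval P (/ t)) x ((- / x ^ 2) * peval (pder P) (/ x))).
  { apply (is_derive_comp (peval P) (fun t => / t)). apply pder_ok.
    replace (- / x ^ 2) with (- 1 / x ^ 2) by (field; lra).
    apply (is_derive_inv (fun t => t) x 1). apply isd_id. lra. }
  assert (D2 : is_derive (fun t => exp (- / t)) x ((/ x ^ 2) * exp (- / x))).
  { apply (is_derive_comp exp (fun t => - / t)). apply is_derive_exp.
    replace (/ x ^ 2) with (- (- 1 / x ^ 2)) by (field; lra).
    apply (is_derive_opp (fun t => / t)).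
    apply (is_derive_inv (fun t => t) x 1). apply isd_id. lra. }
  pose proof (isd_mult _ _ _ _ _ D1 D2) as D.
  eapply is_derive_ext. intro; reflexivity.
  replace (peval (step P) (/ x) * exp (- / x)) with
    ((- / x ^ 2) * peval (pder P) (/ x) * exp (- / x) + peval P (/ x) * (/ x ^ 2 * exp (- / x))).
  exact D.
  unfold step; simpl. rewrite padd_ok, pneg_ok. field. lra.
- rewrite fl_neg by lra.
  apply is_derive_ext_loc with (fun _ => 0).
  { apply filter_imp with (fun t => t < 0); [|apply loc_lt; auto].
    intros t Ht; rewrite fl_neg; lra. }
  apply isd_const.
- subst x. rewrite fl_neg by lra. apply is_derive_Reals.
  intros eps He. destruct (lim0 (0 :: P) eps He) as [d [Hd H]].
  exists (mkposreal d Hd). intros h Hh Hd'. simpl in Hd'.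
  rewrite Rplus_0_l, (fl_neg P 0) by lra.
  destruct (Rlt_or_le 0 h) as [Hp|Hn].
  + rewrite fl_pos by auto. 
    replace ((peval P (/ h) * exp (- / h) - 0) / h - 0) with (peval (0 :: P) (/ h) * exp (- / h)).
    apply H. split; auto. rewrite Rabs_right in Hd'; lra.
    simpl. field. lra.
  + rewrite fl_neg by auto. replace ((0 - 0) / h - 0) with 0 by (field; auto).
    rewrite Rabs_R0; lra.
Qed.

Lemma Cn_fl n : forall P, Cn n (fl P).
Proof.
induction n as [|n IH]; simpl; auto. intro P; split.
- intro x; eexists; apply fl_derive.
- apply Cn_ext with (fl (step P)); auto.
  intro x; symmetry; apply is_derive_unique, fl_derive.
Qed.

Theorem mainTheorem3
  (phi : R -> R) (lambda : R) (h : R -> R)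
  (Hphi_smooth : smooth phi)
  (Hphi_neg : forall t, t <= 0 -> phi t = 0)
  (Hphi_01 : forall t, 0 < t <= 1 -> phi t = exp (- / exp (- / t)))
  (Hphi_incr : forall t, 0 < t -> Derive phi t > 0)
  (Hlambda : 0 < lambda < 1)
  (Hh_neg : forall t, t <= 0 -> h t = t)
  (Hh_pos : forall t, 0 < t -> 0 < h t /\ phi (h t) = lambda ^ 3 * phi t) :
  smooth_near h 0.
Proof.
set (c := - (3 * ln lambda)).
assert (Hc : 0 < c).
{ unfold c. assert (ln lambda < 0). { rewrite <- ln_1. apply ln_increasing; lra. } lra. }
set (w := fl (1 :: nil)).
assert (Hw : forall t, w t = if Rle_dec t 0 then 0 else exp (- / t)).
{ intro t; unfold w, fl; simpl. destruct (Rle_dec t 0); auto. ring. }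
assert (Hw0 : forall t, 0 <= w t).
{ intro t; rewrite Hw; destruct (Rle_dec t 0); [lra|]. apply Rlt_le, exp_pos. }
set (F := fun t => t * ln (1 + c * w t)).
assert (HF : forall t, 0 <= F t).
{ intro t; unfold F. destruct (Rle_dec t 0) as [Ht|Ht].
  - rewrite Hw. destruct (Rle_dec t 0); [|lra]. rewrite Rmult_0_r, Rplus_0_r, ln_1; lra.
  - apply Rmult_le_pos; [lra|]. rewrite <- ln_1. apply ln_le; [lra|].
    pose proof (Hw0 t); nra. }
set (H := fun t => t * / (1 + F t)).
assert (CH : forall n, Cn n H).
{ intro n. unfold H. apply Cn_mult. apply Cn_id.
  apply Cn_inv. intro x; pose proof (HF x); lra.
  apply Cn_plus. apply Cn_const. unfold F. apply Cn_mult. apply Cn_id.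
  apply Cn_ln. intro x; pose proof (Hw0 x); nra.
  apply Cn_plus. apply Cn_const. apply Cn_mult. apply Cn_const. apply Cn_fl. }
assert (Heq : forall t, t < 1 -> H t = h t).
{ intros t Ht. destruct (Rle_dec t 0) as [Ht0|Ht0].
  - rewrite Hh_neg by auto. unfold H, F. rewrite Hw. destruct (Rle_dec t 0); [|lra].
    rewrite Rmult_0_r, Rplus_0_r, ln_1, Rmult_0_r, Rplus_0_r, Rinv_1; ring.
  - assert (Htp : 0 < t) by lra.
    destruct (Hh_pos t Htp) as [Ha Hpa]. set (a := h t) in *.
    assert (Hpt : phi t = exp (- / exp (- / t))) by (apply Hphi_01; lra).
    assert (Hpt0 : 0 < phi t) by (rewrite Hpt; apply exp_pos).
    assert (Hl3 : lambda ^ 3 < 1).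
    { simpl. assert (lambda * lambda < 1) by nra. nra. }
    assert (Hl30 : 0 < lambda ^ 3) by (apply pow_lt; lra).
    assert (Hat : a < t).
    { destruct (Rlt_or_le a t) as [|Hle]; auto. exfalso.
      destruct (Rle_lt_or_eq_dec t a Hle) as [Hlt|Heq'].
      - destruct (MVT_cor2 phi (Derive phi) t a Hlt) as [xi [Hxi Hxi2]].
        { intros x Hx. apply is_derive_Reals. apply Derive_correct.
          exact (Hphi_smooth 1%nat x). }
        pose proof (Hphi_incr xi ltac:(lra)). nra.
      - rewrite <- Heq' in Hpa. nra. }
    assert (Hpa' : phi a = exp (- / exp (- / a))) by (apply Hphi_01; lra).
    rewrite Hpa', Hpt in Hpa.
    assert (E : - / exp (- / a) = 3 * ln lambda + - / exp (- / t)).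
    { rewrite <- (ln_exp (- / exp (- / a))), Hpa, ln_mult, ln_exp, ln_pow by (try apply exp_pos; lra).
      simpl; ring. }
    rewrite <- !exp_Ropp, !Ropp_involutive in E.
    assert (E2 : exp (/ a) = exp (/ t) + c) by (unfold c; lra).
    unfold H, F. rewrite Hw. destruct (Rle_dec t 0); [lra|].
    assert (E3 : 1 + c * exp (- / t) = exp (/ a - / t)).
    { unfold Rminus. rewrite exp_plus, E2, exp_Ropp. field. apply Rgt_not_eq, exp_pos. }
    rewrite E3, ln_exp. replace (1 + t * (/ a - / t)) with (t / a) by (field; lra).
    field. lra. }
exists 1. split; [lra|]. intros n x Hx.
rewrite Rminus_0_r in Hx. apply Rabs_def2 in Hx.
apply ex_derive_n_ext_loc with H.
{ apply filter_imp with (fun t => t < 1); [|apply loc_lt; lra]. intros; apply Heq; auto. }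
destruct n; [simpl; auto|]. apply Cn_ex, CH.
Qed.
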